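(* Assume the setting described in the context, and let $m=l+(k-1)d\in\{1,\dots,d(p+q)\}$ with $k\in\{1,\dots,p+q\}$ and $l\in\{1,\dots,d\}$. For every $z\in B(1,\delta_0)$ there exist $x_1^\pm(z),\dots,x_{p+q}^\pm(z)\in\mathbb C$ such that $$L_m^\pm(z)=\begin{pmatrix}x_1^\pm(z)\mathbf l_l^\pm\\ \vdots\\ x_{p+q}^\pm(z)\mathbf l_l^\pm\end{pmatrix},$$ and moreover $x_1^\pm(z)=\lambda_{l,q}^\pm\,(\zeta_m^\pm)'(z)$ for all $z\in B(1,\delta_0)$.
   Context: Let $d,p,q\ge1$. Let $\mathbf r_1^\pm,\dots,\mathbf r_d^\pm$ be a basis of $\mathbb C^d$ (eigenvectors of $df(u^\pm)$), $\mathbf P^\pm=(\mathbf r_1^\pm|\dots|\mathbf r_d^\pm)$ and $(\mathbf l_1^\pm|\dots|\mathbf l_d^\pm)^T=(\mathbf P^\pm)^{-1}$. Let $A_k^\pm\in\mathcal M_d(\mathbb C)$, $k=-p,\dots,q$, satisfy $(\mathbf P^\pm)^{-1}A_k^\pm\mathbf P^\pm=\mathrm{diag}(\lambda_{1,k}^\pm,\dots,\lambda_{d,k}^\pm)$, with $A^\pm_{-p},A^\pm_q$ invertible, and let $\mathcal F_l^\pm(\kappa)=\sum_{k=-p}^q\lambda_{l,k}^\pm\kappa^k$. Assume $\mathcal F_l^\pm(1)=1$ and that $\mathcal F_l^\pm(\kappa)=1$ has $p+q$ distinct nonzero roots for each $l$. Let $\delta_0>0$ be such that for each $l$ these roots extend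 to holomorphic functions $\zeta_{l+(k-1)d}^\pm$, $k=1,\dots,p+q$, on $B(1,\delta_0)$ with $\mathcal F_l^\pm(\zeta_{l+(k-1)d}^\pm(z))=z$ and the $\zeta^\pm_{l+(k-1)d}(z)$, $k=1,\dots,p+q$, pairwise distinct for each $z$. Define $R_m^\pm(z)=(\zeta_m^\pm(z)^{q-1}\mathbf r_l^\pm,\dots,\zeta_m^\pm(z)^{-p}\mathbf r_l^\pm)^T\in\mathbb C^{d(p+q)}$ for $m=l+(k-1)d$, $N^{\pm,\infty}(z)=(R_1^\pm(z)|\dots|R^\pm_{d(p+q)}(z))$ (invertible), and $L_1^\pm(z),\dots,L_{d(p+q)}^\pm(z)$ by $(L_1^\pm(z)|\dots|L_{d(p+q)}^\pm(z))^T=N^{\pm,\infty}(z)^{-1}$ (the dual basis). *)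

(* Defs.v *)
From HB Require Import structures.
From mathcomp Require Import all_boot all_order all_algebra.
From mathcomp Require Import complex.
From mathcomp Require Import all_classical all_reals all_analysis.
Set Implicit Arguments. Unset Strict Implicit. Unset Printing Implicit Defensive.
Import Order.TTheory GRing.Theory Num.Theory.
Import numFieldNormedType.Exports.
Local Open Scope ring_scope.

Definition Fsym (C : unitRingType) (d p q : nat) (lam : 'I_d -> int -> C)
    (l : 'I_d) (kappa : C) : C :=
  \sum_(i < (p + q).+1) lam l (i%:Z - p%:Z) * kappa ^ (i%:Z - p%:Z).

(* Inverse of mxvec_index: an index a of 'I_(m*n) (row-major order,
   a = i * n + j) is decomposed as the pair (i, j). *)
Definition unvec_index (m n : nat) (a : 'I_(m * n)) : 'I_m * 'I_n :=
  enum_val (cast_ord (esym (mxvec_cast m n)) a).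

(* R_m(z) for m = (k,l) (i.e. m = l + k d, 0-based):
   the stacked vector (zeta^(q-1) r_l, ..., zeta^(-p) r_l), block j having
   exponent q-1-j; r_l is the l-th column of P. *)
Definition Rvec (C : unitRingType) (d p q : nat) (P : 'M[C]_d) (l : 'I_d)
    (zeta : C) : 'rV[C]_((p + q) * d) :=
  mxvec (\matrix_(j < p + q, i < d) (zeta ^ (q%:Z - 1 - j%:Z) * P i l)).

(* N^infty(z) = (R_1(z) | ... | R_{d(p+q)}(z)), columns indexed by
   m = mxvec_index k l. *)
Definition Nmat (C : unitRingType) (d p q : nat) (P : 'M[C]_d)
    (zeta : 'I_(p + q) -> 'I_d -> C -> C) (z : C) : 'M[C]_((p + q) * d) :=
  \matrix_(a, b) Rvec p q P (unvec_index b).2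
                   (zeta (unvec_index b).1 (unvec_index b).2 z) 0 a.

(* Complex differentiability / complex derivative of f : C -> C, with C = R[i]
   viewed as a normed module over itself (increments h range over C). *)
Definition cderivable (R : realType) (f : R[i] -> R[i]) (z : R[i]) : Prop :=
  derivable (f : R[i]^o -> R[i]^o) z 1.
Definition cderive (R : realType) (f : R[i] -> R[i]) (z : R[i]) : R[i] :=
  derive1 (f : R[i]^o -> R[i]^o) z.

(* Main.v *)
Require Import Defs.
From HB Require Import structures.
From mathcomp Require Import all_boot all_order all_algebra.
From mathcomp Require Import complex.
From mathcomp Require Import all_classical all_reals all_analysis.
From mathcomp Require Import ring.
Set Implicit Arguments. Unset Strict Implicit. Unset Printing Implicit Defensive.
Import Order.TTheory GRing.Theory Num.Theory.
Import numFieldNormedType.Exports.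
Local Open Scope ring_scope.

Section H.
Variable K : numFieldType.

Lemma my_derive1_comp (f g : K^o -> K^o) x :
  derivable f x 1 -> derivable g (f x) 1 ->
  derive1 (g \o f) x = derive1 g (f x) * derive1 f x.
Proof.
move=> /derivable1_diffP df /derivable1_diffP dg.
rewrite derive1E'; last exact/differentiable_comp.
rewrite diff_comp // !derive1E' //= -[X in 'd  _ _ X = _]mulr1.
by rewrite [LHS]linearZ mulrC.
Qed.

Lemma my_derivable_comp (f g : K^o -> K^o) x :
  derivable f x 1 -> derivable g (f x) 1 -> derivable (g \o f) x 1.
Proof.
move=> /derivable1_diffP df /derivable1_diffP dg.
apply/derivable1_diffP; exact/differentiable_comp.
Qed.

Lemma my_is_derive_poly (P : {poly K}) (x : K) :
  is_derive (x : K^o) (1 : K^o) (horner P : K^o -> K^o) P^`().[x].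
Proof.
elim/poly_ind: P => [|P c ih].
  have -> : horner (0 : {poly K}) = cst 0 by apply/funext => y; rewrite horner0.
  by rewrite deriv0 horner0; exact: is_derive_cst.
have -> : horner (P * 'X + c%:P) = (horner P * id) + cst c :> (K^o -> K^o).
  by apply/funext => y; rewrite !hornerE.
rewrite derivMXaddC.
apply: is_derive_eq.
by rewrite !hornerE /= [_%:A]mulr1 mulrC.
Qed.
Lemma my_is_derive_comp (f g : K^o -> K^o) x (df dg : K) :
  is_derive (x : K^o) (1 : K^o) f df -> is_derive (f x : K^o) (1 : K^o) g dg ->
  is_derive (x : K^o) (1 : K^o) (g \o f) (dg * df).
Proof.
move=> hf hg; have f1 : derivable f x 1 by case: hf.
have g1 : derivable g (f x) 1 by case: hg.
apply: DeriveDef; first exact: my_derivable_comp.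
by rewrite -derive1E my_derive1_comp // !derive1E !derive_val.
Qed.
End H.

Lemma expz_shift (F : fieldType) (x : F) (n m : nat) (e : int) :
  x != 0 -> (n%:Z + e = m%:Z)%R -> x ^+ n * x ^ e = x ^+ m.
Proof.
move=> x0 H; rewrite -[x ^+ m]/(x ^ (m%:Z)) -H exprzDr ?unitfE //.
Qed.

From mathcomp Require Import zify.

Lemma unvec_mxvec (m n : nat) (i : 'I_m) (j : 'I_n) :
  unvec_index (mxvec_index i j) = (i, j).
Proof. by rewrite /unvec_index /mxvec_index cast_ordK enum_rankK. Qed.

Lemma mxvec_index_inj (m n : nat) (i i' : 'I_m) (j j' : 'I_n) :
  mxvec_index i j = mxvec_index i' j' -> (i, j) = (i', j').
Proof. by move=> E; rewrite -unvec_mxvec E unvec_mxvec. Qed.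

Lemma sum_mxvec (V : nmodType) m n (F : 'I_(m * n) -> V) :
  \sum_a F a = \sum_i \sum_j F (mxvec_index i j).
Proof.
rewrite pair_bigA /= (reindex (fun ij : 'I_m * 'I_n => mxvec_index ij.1 ij.2)) //=.
exists (@unvec_index m n) => [[i j]|x] _; first exact: unvec_mxvec.
by case/mxvec_indexP: x => i j; rewrite unvec_mxvec.
Qed.

Theorem lemma4p2 (R : realType) (d p q : nat)
  (P : 'M[R[i]]_d) (A : int -> 'M[R[i]]_d) (lam : 'I_d -> int -> R[i])
  (delta0 : R) (zeta : 'I_(p + q) -> 'I_d -> R[i] -> R[i]) :
  (0 < d)%N -> (0 < p)%N -> (0 < q)%N ->
  (* columns r_1..r_d of P form a basis *)
  P \in unitmx ->
  (* P^{-1} A_k P = diag(lam_{1,k}, ..., lam_{d,k}) for k = -p..q *)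
  (forall k : int, - p%:Z <= k <= q%:Z ->
     invmx P *m A k *m P = diag_mx (\row_l lam l k)) ->
  A (- p%:Z) \in unitmx -> A q%:Z \in unitmx ->
  (forall l, Fsym p q lam l 1 = 1) ->
  (* F_l(kappa) = 1 has p+q distinct nonzero roots *)
  (forall l, exists rts : 'I_(p + q) -> R[i],
     injective rts /\ (forall k, rts k != 0) /\
     (forall k, Fsym p q lam l (rts k) = 1)) ->
  0 < delta0 ->
  (* the roots extend to holomorphic functions on B(1, delta0) *)
  (forall k l z, `|z - 1| < (delta0%:C)%C -> cderivable (zeta k l) z) ->
  (forall k l z, `|z - 1| < (delta0%:C)%C -> zeta k l z != 0) ->
  (forall k l z, `|z - 1| < (delta0%:C)%C -> Fsym p q lam l (zeta k l z) = z) ->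
  (forall l z, `|z - 1| < (delta0%:C)%C ->
     injective (fun k => zeta k l z)) ->
  (* N^infty(z) is invertible (as asserted in the setting) *)
  (forall z, `|z - 1| < (delta0%:C)%C -> Nmat P zeta z \in unitmx) ->
  forall (k : 'I_(p + q)) (l : 'I_d) (z : R[i]), `|z - 1| < (delta0%:C)%C ->
  exists x : nat -> R[i],
    row (mxvec_index k l) (invmx (Nmat P zeta z))
      = mxvec (\matrix_(j < p + q, i < d) (x j * invmx P l i))
    /\ x 0%N = lam l q%:Z * cderive (zeta k l) z.
Proof.
move=> d0 p0 q0 Pu hA Apu Aqu F1 roots dpos zder znz zF zinj Nu k l z zin.
set zt := zeta k l. set a := zt z.
pose Gp : {poly R[i]} := \poly_(i < (p+q).+1) lam l (i%:Z - p%:Z).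
have GF : forall x, x != 0 -> Gp.[x] = x ^+ p * Fsym p q lam l x.
  move=> x x0; rewrite horner_poly /Fsym mulr_sumr; apply: eq_bigr => i _.
  by rewrite mulrCA (expz_shift (m:=i)) // addrC subrK.
pose H := Gp - z *: 'X^p.
have Hroot : forall k', root H (zeta k' l z).
  by move=> k'; rewrite /root /H !hornerE GF ?znz // zF // mulrC subrr.
have [Q HQ] : exists Q, H = Q * ('X - a%:P) by apply/factor_theorem; exact: Hroot.
have sH : (size H <= (p+q).+1)%N.
  rewrite (leq_trans (size_polyD _ _)) // geq_max size_polyN size_poly /=.
  by rewrite (leq_trans (size_scale_leq _ _)) // size_polyXn ltnS leq_addr.
have sQ : (size Q <= p+q)%N.
  have [->|Q0] := eqVneq Q 0; first by rewrite size_poly0.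
  move: sH; rewrite HQ size_Mmonic ?monicXsubC // size_XsubC addn2 /=.
  by rewrite ltnS.
have cQ : Q`_(p+q).-1 = lam l q%:Z.
  have := congr1 (fun P : {poly R[i]} => P`_(p+q)) HQ => /=.
  rewrite mulrBr !coefB coefMX coefMC coef_poly coefZ coefXn ltnSn.
  rewrite (nth_default 0 sQ) mul0r subr0.
  have -> : (p + q == p)%N = false by apply/negbTE; rewrite -{2}[p]addn0 eqn_add2l -lt0n.
  have -> : (p + q == 0)%N = false by apply/negbTE; rewrite addn_eq0 negb_and -!lt0n q0 orbT.
  by rewrite mulr0 subr0 PoszD addrC addKr => <-.
set zd := cderive zt z.
have dz : zd * Q.[a] = a ^+ p.
  have zd1 : derivable (zt : R[i]^o -> R[i]^o) z 1 := zder k l z zin.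
  have Dzt : is_derive (z : R[i]^o) (1 : R[i]^o) (zt : R[i]^o -> R[i]^o) zd.
    rewrite /zd /cderive derive1E; exact: derivableP.
  have h1 := my_is_derive_comp Dzt (my_is_derive_poly Gp (zt z)).
  have h2 := @is_deriveM _ _ (id : R[i]^o -> R[i]^o) (zt ^+ p) (z : R[i]^o) (1 : R[i]^o) _ _
    (is_derive_id _ _) (is_deriveX p Dzt).
  have D1 := is_deriveB h1 h2.
  have nz : \forall w \near (z : R[i]^o), `|w - 1| < (delta0%:C)%C.
    have e0 : 0 < (delta0%:C)%C - `|z - 1| by rewrite subr_gt0.
    apply: filterS (nbhsx_ballx (z : R[i]^o) _ e0) => w.
    rewrite -ball_normE /= => hw.
    rewrite (le_lt_trans (_ : _ <= `|z - w| + `|z - 1|)) //.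
      by rewrite -(subrKA z) (le_trans (ler_normD _ _)) // distrC.
    by rewrite -ltrBrDr.
  set F := (X in is_derive _ _ X _) in D1.
  have D0 : is_derive (z : R[i]^o) (1 : R[i]^o) F 0.
    apply: near_eq_is_derive (is_derive_cst 0 _ _).
    apply: filterS nz => w hw /=.
    by rewrite /F !fctE GF ?znz // zF // mulrC subrr.
  have E := etrans (esym (@derive_val _ _ _ _ _ _ _ D0)) (@derive_val _ _ _ _ _ _ _ D1).
  have QH : Q.[a] = (Gp^`()).[a] - z * (a ^+ p.-1 *+ p).
    have := congr1 (fun P : {poly R[i]} => (P^`()).[a]) HQ.
    rewrite /= derivM derivXsubC !hornerE subrr mulr0 add0r => <-.
    by rewrite /H derivB derivZ derivXn !hornerE hornerMn hornerXn.
  move/eqP: E; rewrite eq_sym subr_eq0 => /eqP E.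
  rewrite QH mulrBr mulrC E /= [_%:A]mulr1 exprfctE.
  have sc : forall u v : R[i], (u *: (v : R[i]^o)) = u * v by [].
  rewrite !sc -mulr_natl /a; ring.
pose c (j : nat) := Q`_((p+q).-1 - j).
pose t (x : R[i]) := \sum_(j < p+q) c j * x ^ (q%:Z - 1 - j%:Z).
have tQ : forall x, x != 0 -> x ^+ p * t x = Q.[x].
  move=> x x0; rewrite (horner_coef_wide _ sQ) /t mulr_sumr (reindex_inj rev_ord_inj) /=.
  apply: eq_bigr => j _; rewrite mulrCA (expz_shift (m := j)) //.
    by rewrite /c; congr (_`_ _ * _); have := ltn_ord j; lia.
  have := ltn_ord j; lia.
have s1 : zd * t a = 1.
  have a0 : a != 0 by exact: znz.
  apply: (mulfI (expf_neq0 p a0)); rewrite mulr1 mulrCA tQ //.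
have tz : forall k', k' != k -> t (zeta k' l z) = 0.
  move=> k' kk; have x0 := znz k' l z zin.
  have := tQ _ x0; have := Hroot k'; rewrite /root HQ hornerM hornerXsubC mulf_eq0.
  have -> : (zeta k' l z - a == 0) = false.
    apply/negbTE; rewrite subr_eq0; apply/eqP => E.
    by move/eqP: kk; apply; apply: (zinj l z zin).
  rewrite orbF => /eqP ->.
  by move/eqP; rewrite mulf_eq0 expf_eq0 (negbTE x0) andbF /= => /eqP.
set N := Nmat P zeta z. set m := mxvec_index k l.
pose W := mxvec (\matrix_(j < p+q, i < d) (c j * invmx P l i)).
have WN : W *m N = t a *: delta_mx 0 m.
  apply/rowP => b; rewrite !mxE.
  case/mxvec_indexP: b => k' l'.
  under eq_bigr do rewrite /N /Nmat mxE unvec_mxvec /=.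
  rewrite sum_mxvec.
  under eq_bigr do under eq_bigr do rewrite /W /Rvec !mxvecE !mxE.
  have -> : \sum_(j < p + q) \sum_(i < d)
      (c j * invmx P l i * ((zeta k' l' z) ^ (q%:Z - 1 - j%:Z) * P i l'))
      = t (zeta k' l' z) * (l == l')%:R.
    rewrite /t mulr_suml; apply: eq_bigr => j _.
    have -> : (l == l')%:R = (invmx P *m P) l l' by rewrite mulVmx // mxE.
    rewrite mxE mulr_sumr; apply: eq_bigr => i _; ring.
  have [<-|ll] := eqVneq l l'.
    have [<-|kk] := eqVneq k k'; first by rewrite eqxx mulr1 /m eqxx mulr1.
    rewrite tz; last by rewrite eq_sym.
    rewrite mul0r.
    have -> : (mxvec_index k' l == m) = false.
      by apply/negbTE/eqP => /mxvec_index_inj [E]; move/eqP: kk; rewrite E.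
    by rewrite andbF mulr0.
  have -> : (mxvec_index k' l' == m) = false.
    by apply/negbTE/eqP => /mxvec_index_inj [_ E]; move/eqP: ll; rewrite E.
  by rewrite andbF mulr0 mulr0.
exists (fun j => c j * zd); split; last by rewrite /c subn0 cQ.
rewrite rowE -[delta_mx 0 m]scale1r -s1 -scalerA -WN scalemxAl mulmxK //; last exact: Nu.
rewrite -linearZ /=; congr mxvec; apply/matrixP => j i; rewrite !mxE.
by rewrite mulrA [zd * _]mulrC.
Qed.
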